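(* Let $G$ be a compact group and $\alpha$ an automorphism of $G$ such that $(G,\alpha)$ is topologically transitive and has finite depth. Then the homoclinic group $\mathrm{con}(\alpha)\cap\mathrm{con}(\alpha^{-1})$ is dense in $G$.
   Context: $\mathrm{con}(\beta)=\{x\in G:\beta^n(x)\to1 \text{ as } n\to\infty\}$. $(G,\alpha)$ is topologically transitive if some orbit $\{\alpha^n(x):n\in\mathbb{Z}\}$ is dense in $G$; it has finite depth if there is an open subgroup $V\le G$ with $\bigcap_{k\in\mathbb{Z}}\alpha^k(V)=\{1\}$. *)

(* Defs.v *)
From HB Require Import structures.
From mathcomp Require Import all_boot all_order all_algebra.
From mathcomp Require Import all_classical all_reals topology.
Set Implicit Arguments. Unset Strict Implicit. Unset Printing Implicit Defensive.
Import Order.TTheory GRing.Theory Num.Theory.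
Local Open Scope classical_set_scope.

Definition is_topological_group (G : topologicalType)
  (mul : G -> G -> G) (inv : G -> G) (e : G) : Prop :=
  [/\ (forall x y z, mul x (mul y z) = mul (mul x y) z),
      (forall x, mul e x = x /\ mul x e = x),
      (forall x, mul (inv x) x = e /\ mul x (inv x) = e),
      continuous (fun p : G * G => mul p.1 p.2) &
      continuous inv].

Definition is_top_group_automorphism (G : topologicalType)
  (mul : G -> G -> G) (alpha alpha_inv : G -> G) : Prop :=
  [/\ (forall x y, alpha (mul x y) = mul (alpha x) (alpha y)),
      cancel alpha alpha_inv, cancel alpha_inv alpha,
      continuous alpha & continuous alpha_inv].

Definition zpow (G : Type) (alpha alpha_inv : G -> G) (k : int) : G -> G :=
  match k with
  | Posz n => iter n alpha
  | Negz n => iter n.+1 alpha_inv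
  end.

Definition con (G : topologicalType) (e : G) (beta : G -> G) : set G :=
  [set x | (fun n : nat => iter n beta x) @ \oo --> e].

Definition top_transitive (G : topologicalType) (alpha alpha_inv : G -> G)
  : Prop :=
  exists x : G, closure [set zpow alpha alpha_inv k x | k in [set: int]] = setT.

Definition is_subgroup (G : Type) (mul : G -> G -> G) (inv : G -> G) (e : G)
  (V : set G) : Prop :=
  [/\ V e, (forall x y, V x -> V y -> V (mul x y)) & (forall x, V x -> V (inv x))].

Definition finite_depth (G : topologicalType) (mul : G -> G -> G) (inv : G -> G)
  (e : G) (alpha alpha_inv : G -> G) : Prop :=
  exists V : set G, [/\ open V, is_subgroup mul inv e V &
    \bigcap_(k in [set: int]) (zpow alpha alpha_inv k @` V) = [set e]].

(* Main.v *)
Require Import Defs.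
From HB Require Import structures.
From mathcomp Require Import all_boot all_order all_algebra.
From mathcomp Require Import all_classical all_reals topology.
From mathcomp Require Import zify.
Set Implicit Arguments. Unset Strict Implicit. Unset Printing Implicit Defensive.
Import Order.TTheory GRing.Theory Num.Theory.
Local Open Scope classical_set_scope.

Record setup (G : topologicalType) := Setup {
  gm : G -> G -> G; gi : G -> G; ge : G; al : G -> G; ai : G -> G; V : set G;
  tg : is_topological_group gm gi ge;
  hs : hausdorff_space G;
  cpt : compact [set: G];
  aut : is_top_group_automorphism gm al ai;
  Vo : open V;
  Vs : is_subgroup gm gi ge V;
  Vd : \bigcap_(k in [set: int]) (zpow al ai k @` V) = [set ge] }.

Lemma gA G (S : setup G) x y z : gm S x (gm S y z) = gm S (gm S x y) z.
Proof. by case: (tg S). Qed.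
Lemma g1x G (S : setup G) x : gm S (ge S) x = x.
Proof. by case: (tg S) => _ h *; case: (h x). Qed.
Lemma gx1 G (S : setup G) x : gm S x (ge S) = x.
Proof. by case: (tg S) => _ h *; case: (h x). Qed.
Lemma gVx G (S : setup G) x : gm S (gi S x) x = ge S.
Proof. by case: (tg S) => _ _ h *; case: (h x). Qed.
Lemma gxV G (S : setup G) x : gm S x (gi S x) = ge S.
Proof. by case: (tg S) => _ _ h *; case: (h x). Qed.
Lemma gKl G (S : setup G) x y : gm S (gi S x) (gm S x y) = y.
Proof. by rewrite gA gVx g1x. Qed.
Lemma gKVl G (S : setup G) x y : gm S x (gm S (gi S x) y) = y.
Proof. by rewrite gA gxV g1x. Qed.
Lemma gKr G (S : setup G) x y : gm S (gm S y x) (gi S x) = y.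
Proof. by rewrite -gA gxV gx1. Qed.
Lemma gKVr G (S : setup G) x y : gm S (gm S y (gi S x)) x = y.
Proof. by rewrite -gA gVx gx1. Qed.
Lemma gcanl G (S : setup G) x y z : gm S x y = gm S x z -> y = z.
Proof. by move=> h; rewrite -(gKl S x y) h gKl. Qed.
Lemma ginv_uniq G (S : setup G) x y : gm S x y = ge S -> y = gi S x.
Proof. by move=> h; apply: (@gcanl G S x); rewrite h gxV. Qed.
Lemma ginvK G (S : setup G) x : gi S (gi S x) = x.
Proof. by symmetry; apply: ginv_uniq; rewrite gVx. Qed.
Lemma ginvM G (S : setup G) x y : gi S (gm S x y) = gm S (gi S y) (gi S x).
Proof. by symmetry; apply: ginv_uniq; rewrite gA gKr gxV. Qed.
Lemma ginv1 G (S : setup G) : gi S (ge S) = ge S.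
Proof. by symmetry; apply: ginv_uniq; rewrite g1x. Qed.
Lemma gmc G (S : setup G) : continuous (fun p : G * G => gm S p.1 p.2).
Proof. by case: (tg S). Qed.
Lemma gic G (S : setup G) : continuous (gi S).
Proof. by case: (tg S). Qed.
Lemma alM G (S : setup G) x y : al S (gm S x y) = gm S (al S x) (al S y).
Proof. by case: (aut S). Qed.
Lemma alK G (S : setup G) : cancel (al S) (ai S).
Proof. by case: (aut S). Qed.
Lemma aiK G (S : setup G) : cancel (ai S) (al S).
Proof. by case: (aut S). Qed.
Lemma alc G (S : setup G) : continuous (al S).
Proof. by case: (aut S). Qed.
Lemma aic G (S : setup G) : continuous (ai S).
Proof. by case: (aut S). Qed.
Lemma aiM G (S : setup G) x y : ai S (gm S x y) = gm S (ai S x) (ai S y).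
Proof. by apply: (can_inj (alK S)); rewrite alM !aiK. Qed.

Definition zp G (S : setup G) k := zpow (al S) (ai S) k.

Lemma zp0 G (S : setup G) x : zp S 0 x = x. Proof. by []. Qed.
Lemma zpS G (S : setup G) k x : zp S (k + 1) x = al S (zp S k x).
Proof.
case: k => [n|[|n]]; rewrite /zp.
- have -> : (Posz n + 1 = Posz n.+1)%R by rewrite -PoszD addn1.
  by [].
- have -> : (Negz 0 + 1 = 0)%R by [].
  by rewrite /= aiK.
- have -> : (Negz n.+1 + 1 = Negz n)%R.
    by rewrite !NegzE -[n.+2]addn1 PoszD opprD subrK.
  by rewrite [in RHS]/= aiK.
Qed.
Lemma zpP G (S : setup G) k x : zp S (k - 1) x = ai S (zp S k x).
Proof. by rewrite -{2}(subrK 1%R k) zpS alK. Qed.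

Lemma zpD G (S : setup G) k j x : zp S (k + j) x = zp S k (zp S j x).
Proof.
elim/int_rect: k => [|n IH|n IH].
- by rewrite add0r.
- have -> : (n.+1%:Z + j = (n%:Z + j) + 1)%R by rewrite -addn1 PoszD addrAC.
  rewrite zpS IH.
  have -> : (n.+1%:Z = n%:Z + 1)%R by rewrite -addn1 PoszD.
  by rewrite zpS.
- have -> : (- n.+1%:Z + j = (- n%:Z + j) - 1)%R by rewrite -addn1 PoszD opprD addrAC.
  rewrite zpP IH.
  have -> : (- n.+1%:Z = - n%:Z - 1)%R by rewrite -addn1 PoszD opprD.
  by rewrite zpP.
Qed.

Lemma zpM G (S : setup G) k x y : zp S k (gm S x y) = gm S (zp S k x) (zp S k y).
Proof.
elim/int_rect: k => [|n IH|n IH] //.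
- have -> : (n.+1%:Z = n%:Z + 1)%R by rewrite -addn1 PoszD.
  by rewrite !zpS IH alM.
- have -> : (- n.+1%:Z = - n%:Z - 1)%R by rewrite -addn1 PoszD opprD.
  by rewrite !zpP IH aiM.
Qed.

Lemma zpe G (S : setup G) k : zp S k (ge S) = ge S.
Proof.
apply/esym/(@gcanl G S (zp S k (ge S))).
by rewrite -zpM !gx1.
Qed.

Lemma zpV G (S : setup G) k x : zp S k (gi S x) = gi S (zp S k x).
Proof. by apply: ginv_uniq; rewrite -zpM gxV zpe. Qed.

Lemma zpc G (S : setup G) k : continuous (zp S k).
Proof.
elim/int_rect: k => [|n IH|n IH].
- by move=> x; rewrite /zp /=; apply: cvg_id.
- have -> : zp S n.+1 = al S \o zp S n.
    by apply/funext => y; rewrite -addn1 PoszD zpS.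
  by move=> x; apply: continuous_comp; [exact: IH|exact: alc].
- have -> : zp S (- n.+1%:Z) = ai S \o zp S (- n%:Z).
    by apply/funext => y; rewrite -addn1 PoszD opprD zpP.
  by move=> x; apply: continuous_comp; [exact: IH|exact: aic].
Qed.

Lemma zpK G (S : setup G) k x : zp S (- k) (zp S k x) = x.
Proof. by rewrite -zpD addNr. Qed.
Lemma zpKV G (S : setup G) k x : zp S k (zp S (- k) x) = x.
Proof. by rewrite -zpD subrr. Qed.

Lemma iter_al G (S : setup G) n x : iter n (al S) x = zp S n x.
Proof. by []. Qed.
Lemma iter_ai G (S : setup G) n x : iter n (ai S) x = zp S (- n%:Z) x.
Proof. by case: n. Qed.
Lemma lmulc G (S : setup G) a : continuous (gm S a).
Proof.
move=> y.
have -> : gm S a = (fun p : G * G => gm S p.1 p.2) \o (fun z => (a, z)) by [].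
apply: continuous_comp; last exact: gmc.
apply: cvg_pair; [exact: cvg_cst | exact: cvg_id].
Qed.
Lemma rmulc G (S : setup G) a : continuous (fun y => gm S y a).
Proof.
move=> y.
have -> : (fun y => gm S y a) = (fun p : G * G => gm S p.1 p.2) \o (fun z => (z, a)) by [].
apply: continuous_comp; last exact: gmc.
apply: cvg_pair; [exact: cvg_id | exact: cvg_cst].
Qed.

Lemma V1 G (S : setup G) : V S (ge S). Proof. by case: (Vs S). Qed.
Lemma VM G (S : setup G) x y : V S x -> V S y -> V S (gm S x y).
Proof. by case: (Vs S) => _ h _; apply: h. Qed.
Lemma VV G (S : setup G) x : V S x -> V S (gi S x).
Proof. by case: (Vs S) => _ _ h; apply: h. Qed.

Lemma Vclosed G (S : setup G) : closed (V S).
Proof.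
rewrite -[V S]setCK closedC openE => z nVz.
have op : open (gm S (gi S z) @^-1` V S).
  by apply: open_comp => [y _|]; [exact: lmulc|exact: Vo].
apply: (filterS _ (open_nbhs_nbhs (conj op _))); last by rewrite /= gVx; exact: V1.
move=> y /= Vzy Vy; apply: nVz.
have -> : z = gm S y (gi S (gm S (gi S z) y)) by rewrite ginvM ginvK gKVl.
by apply: VM => //; apply: VV.
Qed.
Lemma nested_nonempty (T : topologicalType) (C : nat -> set T) :
  compact [set: T] -> (forall n, closed (C n)) -> (forall n, C n.+1 `<=` C n) ->
  (forall n, C n !=set0) -> exists p, forall n, C n p.
Proof.
move=> cpt ccl dec ne.
have mono : forall m n, (m <= n)%N -> C n `<=` C m.
  move=> m n /subnK <-; elim: (n - m)%N => [|k IH] //.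
  by rewrite addSn; apply: subset_trans (dec _) IH.
pose F := filter_from setT C.
have FF : ProperFilter F.
  apply: filter_from_proper; last by move=> i _; exact: ne.
  apply: filter_fromT_filter; first by exists 0%N.
  move=> i j; exists (maxn i j) => x Cx; split.
  - by apply: (mono _ (maxn i j)) => //; exact: leq_maxl.
  - by apply: (mono _ (maxn i j)) => //; exact: leq_maxr.
have FT : F setT by exists 0%N.
have [p [_ cp]] := cpt F FF FT.
exists p => n; apply: ccl.
rewrite clusterE in cp; apply: cp; by exists n.
Qed.

Lemma nested_sub (T : topologicalType) (C : nat -> set T) (O : set T) :
  compact [set: T] -> (forall n, closed (C n)) -> (forall n, C n.+1 `<=` C n) ->
  open O -> (forall p, (forall n, C n p) -> O p) -> exists n, C n `<=` O.
Proof.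
move=> cpt ccl dec oO hO.
apply: contrapT => hn.
have [p hp] : exists p, forall n, (C n `&` ~` O) p.
  apply: nested_nonempty => //.
  - by move=> n; apply: closedI => //; exact: open_closedC.
  - by move=> n x [Cx nOx]; split => //; exact: dec.
  - move=> n; apply: contrapT => hne; apply: hn; exists n => x Cx.
    by apply: contrapT => nOx; apply: hne; exists x.
by have [_] := hp 0%N; apply; apply: hO => n; case: (hp n).
Qed.
Definition T G (S : setup G) (K : set int) : set G :=
  [set x | forall k, K k -> V S (zp S k x)].

Lemma T1 G (S : setup G) K : T S K (ge S).
Proof. by move=> k _; rewrite zpe; exact: V1. Qed.
Lemma TM G (S : setup G) K x y : T S K x -> T S K y -> T S K (gm S x y).
Proof. by move=> hx hy k Kk; rewrite zpM; apply: VM; [exact: hx|exact: hy]. Qed.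
Lemma TV G (S : setup G) K x : T S K x -> T S K (gi S x).
Proof. by move=> hx k Kk; rewrite zpV; apply: VV; exact: hx. Qed.
Lemma TS G (S : setup G) (K K' : set int) : K `<=` K' -> T S K' `<=` T S K.
Proof. by move=> sK x hx k Kk; apply: hx; exact: sK. Qed.
Lemma TU G (S : setup G) (K K' : set int) x : T S K x -> T S K' x -> T S (K `|` K') x.
Proof. by move=> h1 h2 k [] ?; [exact: h1|exact: h2]. Qed.

Lemma Tclosed G (S : setup G) K : closed (T S K).
Proof.
have -> : T S K = \bigcap_(k in K) (zp S k @^-1` V S).
  by apply/seteqP; split => x hx k Kk; exact: hx.
apply: closed_bigI => k _; apply: preimage_closed; last exact: Vclosed.
by move=> x _; exact: zpc.
Qed.

Lemma Tshift G (S : setup G) K j x :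
  T S K (zp S j x) <-> T S (fun k => K (k - j)%R) x.
Proof.
split => h k Kk.
- by have := h _ Kk; rewrite -zpD subrK.
- by have := h (k + j)%R; rewrite zpD addrK; apply.
Qed.

Definition Iw (a : int) (n : nat) : set int := [set k | (a <= k)%R /\ (k <= a + n%:Z)%R].

Lemma Topen G (S : setup G) a n : open (T S (Iw a n)).
Proof.
elim: n => [|n IH].
- have -> : T S (Iw a 0) = zp S a @^-1` V S.
    apply/seteqP; split => x hx.
    + by apply: hx; rewrite /Iw /= addr0 lexx.
    + move=> k [h1 h2]; rewrite addr0 in h2.
      by have -> : k = a by apply/eqP; rewrite eq_le h1 h2.
  by apply: open_comp => [y _|]; [exact: zpc|exact: Vo].
- have -> : T S (Iw a n.+1) = T S (Iw a n) `&` (zp S (a + n.+1%:Z)%R @^-1` V S).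
    apply/seteqP; split => x hx.
    + split; last by apply: hx; split; [rewrite lerDl|].
      apply: TS hx => k [h1 h2]; split => //; apply: (le_trans h2).
      by lia.
    + case: hx => h1 h2 k [k1 k2].
      have [k3|k3] := leP k (a + n%:Z)%R; first exact: h1.
      have -> : k = (a + n.+1%:Z)%R => //.
      apply/eqP; rewrite eq_le k2 /=.
      by move: k3 k2; rewrite -addn1 PoszD; lia.
  by apply: openI => //; apply: open_comp => [y _|]; [exact: zpc|exact: Vo].
Qed.
Lemma Tall_e G (S : setup G) x : (forall k, V S (zp S k x)) -> x = ge S.
Proof.
move=> hx.
have h : (\bigcap_(k in [set: int]) (zpow (al S) (ai S) k @` V S)) x.
  move=> k _; exists (zp S (- k) x); first exact: hx.
  exact: zpKV.
by rewrite (Vd S) in h.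
Qed.

Lemma nbase G (S : setup G) O : open O -> O (ge S) ->
  exists m : nat, T S (Iw (- m%:Z) (m + m)) `<=` O.
Proof.
move=> oO Oe.
pose C := fun m : nat => T S (Iw (- m%:Z) (m + m)).
have ccl : forall n, closed (C n) by move=> n; exact: Tclosed.
have dec : forall n, C n.+1 `<=` C n.
  by move=> n; apply: TS => k [h1 h2]; split; lia.
have hint : forall p, (forall n, C n p) -> O p.
  move=> p hp; have -> : p = ge S => //.
  by apply: Tall_e => k; apply: (hp (absz k)); split; lia.
have [n hn] := nested_sub (cpt S) ccl dec oO hint.
by exists n.
Qed.

Lemma nbase' G (S : setup G) O : nbhs (ge S) O ->
  exists m : nat, T S (Iw (- m%:Z) (m + m)) `<=` O.
Proof.
rewrite nbhsE => -[O' [oO' O'e] sO].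
have [m hm] := nbase oO' O'e; exists m; exact: subset_trans hm sO.
Qed.

Lemma T_con G (S : setup G) x (c : int) :
  T S (fun k => (c <= k)%R) x -> con (ge S) (al S) x.
Proof.
move=> hx O /nbase' [m hm].
exists (absz c + m)%N => // n /= hn.
apply: hm; rewrite iter_al; apply/Tshift => k [h1 h2]; apply: hx.
move: hn h1 h2; lia.
Qed.

Lemma T_con_inv G (S : setup G) x (c : int) :
  T S (fun k => (k <= c)%R) x -> con (ge S) (ai S) x.
Proof.
move=> hx O /nbase' [m hm].
exists (absz c + m)%N => // n /= hn.
apply: hm; rewrite iter_ai; apply/Tshift => k [h1 h2]; apply: hx.
move: hn h1 h2; lia.
Qed.
Lemma Vtrans G (S : setup G) u x y :
  V S (gm S (gi S u) x) -> V S (gm S (gi S x) y) -> V S (gm S (gi S u) y).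
Proof.
move=> h1 h2; have -> : gm S (gi S u) y = gm S (gm S (gi S u) x) (gm S (gi S x) y).
  by rewrite -gA gKVl.
exact: VM.
Qed.

Lemma Vsym G (S : setup G) u x : V S (gm S (gi S u) x) -> V S (gm S (gi S x) u).
Proof. by move=> h; have := VV h; rewrite ginvM ginvK. Qed.

Lemma nbV G (S : setup G) z : nbhs z (gm S (gi S z) @^-1` V S).
Proof.
apply: open_nbhs_nbhs; split; last by rewrite /= gVx; exact: V1.
by apply: open_comp => [y _|]; [exact: lmulc|exact: Vo].
Qed.

Definition E G (S : setup G) (n : nat) : set G :=
  [set x | exists u, T S (Iw 1 n) u /\ V S (gm S (gi S u) x)].

Lemma stab G (S : setup G) : exists N : nat, forall n, (N <= n)%N ->
  forall x, T S (Iw 1 N) x -> exists u, T S (Iw 1 n) u /\ V S (gm S (gi S u) x).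
Proof.
have ccl : forall n, closed (E S n).
  move=> n; rewrite -[E S n]setCK closedC openE => z nEz.
  apply: (filterS _ (nbV S z)) => y /= Vzy [u [Tu Vuy]].
  apply: nEz; exists u; split => //; apply: (Vtrans Vuy); exact: Vsym.
have dec : forall n, E S n.+1 `<=` E S n.
  move=> n x [u [Tu Vux]]; exists u; split => //.
  by apply: TS Tu => k [h1 h2]; split; lia.
have oE : open [set x | forall n, E S n x].
  rewrite openE => x hx; apply: (filterS _ (nbV S x)) => y /= Vxy n.
  have [u [Tu Vux]] := hx n; exists u; split => //; exact: (Vtrans Vux).
have [N hN] := nested_sub (cpt S) ccl dec oE (fun p hp => hp).
exists N => n hn x Tx.
have [|u hu] := hN x _ n; last by exists u.
by exists x; split => //; rewrite gVx; exact: V1.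
Qed.
Definition J (a b : int) : set int := [set k | (a <= k)%R /\ (k <= b)%R].

Lemma Tshift' G (S : setup G) K j u : T S K u -> T S (fun k => K (k - j)%R) (zp S (- j) u).
Proof. by move=> h; apply/Tshift => k; rewrite opprK addrK => /h. Qed.

Lemma stab_shift G (S : setup G) N : (forall n, (N <= n)%N ->
  forall x, T S (Iw 1 N) x -> exists u, T S (Iw 1 n) u /\ V S (gm S (gi S u) x)) ->
  forall (j : int) n, (N <= n)%N -> forall y, T S (J (1 + j) (1 + j + N%:Z)) y ->
  exists u, T S (J (1 + j) (1 + j + n%:Z)) u /\ V S (zp S j (gm S (gi S u) y)).
Proof.
move=> hN j n hn y Ty.
have [|u' [Tu' Vu']] := hN n hn (zp S j y).
  by apply/Tshift => k [h1 h2]; apply: Ty; split; lia.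
exists (zp S (- j) u'); split.
  have := Tshift' (j:=j) Tu'; apply: TS => k [h1 h2]; split; lia.
by rewrite zpM zpV zpKV.
Qed.
Lemma Qm G (S : setup G) N : (forall n, (N <= n)%N ->
  forall x, T S (Iw 1 N) x -> exists u, T S (Iw 1 n) u /\ V S (gm S (gi S u) x)) ->
  forall m : nat, forall y, T S (J 1 (1 + N%:Z)) y -> forall L : int, (1 + N%:Z <= L)%R ->
  exists u, T S (J 1 L) u /\ T S (J (1 - m%:Z) (1 + N%:Z)) (gm S (gi S u) y).
Proof.
move=> hN; elim=> [|m IH] y Ty L hL.
  exists (ge S); split; first exact: T1.
  by rewrite ginv1 g1x; apply: TS Ty => k [h1 h2]; split; lia.
have [u [Tu Tv]] := IH y Ty L hL.
set v := gm S (gi S u) y in Tv.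
have hn : (N <= N + absz L + m)%N by lia.
have [|u' [Tu' Vu']] := stab_shift hN (j := (- m%:Z)%R) hn (y := v).
  by apply: TS Tv => k [h1 h2]; split; lia.
exists (gm S u u'); split.
  apply: TM => //; apply: TS Tu' => k [h1 h2]; split; lia.
rewrite ginvM -gA -/v => k [h1 h2].
have [k1|k1] := ltP k (1 - m%:Z)%R.
  have -> : k = (- m%:Z)%R by lia.
  exact: Vu'.
rewrite zpM; apply: VM; last by apply: Tv; split; lia.
by rewrite zpV; apply: VV; apply: Tu'; split; lia.
Qed.
Lemma decomp G (S : setup G) N : (forall n, (N <= n)%N ->
  forall x, T S (Iw 1 N) x -> exists u, T S (Iw 1 n) u /\ V S (gm S (gi S u) x)) ->
  forall y, T S (J 1 (1 + N%:Z)) y ->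
  exists u, T S (fun k => (1 <= k)%R) u /\ T S (fun k => (k <= 1 + N%:Z)%R) (gm S (gi S u) y).
Proof.
move=> hN y Ty.
pose C := fun k : nat => [set u | T S (J 1 (1 + N%:Z + k%:Z)) u /\
                                   T S (J (1 - k%:Z) (1 + N%:Z)) (gm S (gi S u) y)].
have cont : continuous (fun u => gm S (gi S u) y).
  have -> : (fun u => gm S (gi S u) y) = (fun z => gm S z y) \o gi S by [].
  by move=> u; apply: continuous_comp; [exact: gic|exact: rmulc].
have ccl : forall k, closed (C k).
  move=> k; apply: closedI; first exact: Tclosed.
  by apply: preimage_closed; [move=> u _; exact: cont|exact: Tclosed].
have dec : forall k, C k.+1 `<=` C k.
  by move=> k u [h1 h2]; split; [apply: TS h1|apply: TS h2] => i [i1 i2]; split; lia.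
have ne : forall k, C k !=set0.
  move=> k; have [|u hu] := Qm hN k Ty (L := (1 + N%:Z + k%:Z)%R); first lia.
  by exists u.
have [u hu] := nested_nonempty (cpt S) ccl dec ne.
exists u; split => k hk.
- by case: (hu (absz k)) => h _; apply: h; split; lia.
- by case: (hu (absz k).+1) => _ h; apply: h; split; lia.
Qed.
Lemma decomp_shift G (S : setup G) N : (forall n, (N <= n)%N ->
  forall x, T S (Iw 1 N) x -> exists u, T S (Iw 1 n) u /\ V S (gm S (gi S u) x)) ->
  forall (j : int) y, T S (J (1 + j) (1 + j + N%:Z)) y ->
  exists u, T S (fun k => (1 + j <= k)%R) u /\
            T S (fun k => (k <= 1 + j + N%:Z)%R) (gm S (gi S u) y).
Proof.
move=> hN j y Ty.
have [|u' [Tu' Tw']] := decomp hN (y := zp S j y).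
  by apply/Tshift => k [h1 h2]; apply: Ty; split; lia.
exists (zp S (- j) u'); split.
  by have := Tshift' (j:=j) Tu'; apply: TS => k h; lia.
have e1 : gm S (gi S u') (zp S j y) = zp S j (gm S (gi S (zp S (- j) u')) y).
  by rewrite zpM zpV zpKV.
rewrite e1 in Tw'; move/Tshift: Tw'; apply: TS => k h; lia.
Qed.
Lemma cut G (S : setup G) N : (forall n, (N <= n)%N ->
  forall x, T S (Iw 1 N) x -> exists u, T S (Iw 1 n) u /\ V S (gm S (gi S u) x)) ->
  forall (m : nat) (q j : int) z, (m%:Z <= q)%R -> (j <= - m%:Z - 1)%R ->
  T S (J (1 + q) (1 + q + N%:Z)) z -> T S (J (1 + j) (1 + j + N%:Z)) z ->
  exists w, T S (J (- m%:Z) m%:Z) w /\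
    con (ge S) (al S) (gm S z w) /\ con (ge S) (ai S) (gm S z w).
Proof.
move=> hN m q j z hq hj Tq Tj.
have [u [Tu Tt]] := decomp_shift hN Tq.
set t := gm S (gi S u) z in Tt.
have eu : u = gm S z (gi S t) by rewrite /t ginvM ginvK gKVl.
have Th1 : T S (J (1 + j) (1 + j + N%:Z)) (gi S u).
  rewrite eu; apply: TV; apply: TM => //; apply: TV.
  by apply: TS Tt => k [h1 h2]; lia.
have [u2 [Tu2 Tw2]] := decomp_shift hN Th1.
exists (gm S (gi S t) u2); split; [|split].
- apply: TM; first by apply: TV; apply: TS Tt => k [h1 h2]; lia.
  by apply: TS Tu2 => k [h1 h2]; lia.
- rewrite gA -eu; apply: (@T_con _ S _ (1 + q)%R); apply: TM => //.
  by apply: TS Tu2 => k h; lia.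
- rewrite gA -eu.
  have -> : gm S u u2 = gi S (gm S (gi S u2) (gi S u)) by rewrite ginvM !ginvK.
  by apply: (@T_con_inv _ S _ (1 + j + N%:Z)%R); apply: TV.
Qed.
Lemma box G (S : setup G) p O : nbhs p O -> exists P Q,
  [/\ open P, P p, nbhs (ge S) Q & forall z w, P z -> Q w -> O (gm S z w)].
Proof.
move=> hO.
have h : nbhs (p, ge S) ((fun pr : G * G => gm S pr.1 pr.2) @^-1` O).
  by have := @gmc G S (p, ge S) O; rewrite /= gx1; apply.
have [[P0 Q] [P0p Qe] sub] := h.
move: P0p; rewrite nbhsE => -[P [oP Pp] sP].
exists P, Q; split => // z w Pz Qw.
by apply: (sub (z, w)); split => //; apply: sP.
Qed.
Lemma ML G (S : setup G) x0 :
  (forall O, open O -> O !=set0 -> forall M : nat, exists n : nat, (M <= n)%N /\ O (zp S n x0)) ->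
  closure (con (ge S) (al S) `&` con (ge S) (ai S)) = setT.
Proof.
move=> rec.
have [N hN] := stab S.
apply/seteqP; split => // p _ O hO.
have [P [Q [oP Pp Qe PQ]]] := box S hO.
have [m hm] := nbase' Qe.
have oW := Topen S 0 N.
have We : T S (Iw 0 N) (ge S) by exact: T1.
have [b [_ hb]] := rec _ oW (ex_intro _ _ We) 0%N.
have [a [ha hPa]] := rec _ oP (ex_intro _ _ Pp) (b + m + 1)%N.
have [c [hc hWc]] := rec _ oW (ex_intro _ _ We) (a + m + 1)%N.
set z := zp S a x0.
have sh : forall t : nat, T S (Iw 0 N) (zp S t x0) ->
    T S (J (t%:Z - a%:Z) (t%:Z - a%:Z + N%:Z)) z.
  move=> t; have -> : zp S t x0 = zp S (t%:Z - a%:Z)%R z by rewrite /z -zpD subrK.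
  move=> /Tshift.
  by apply: TS => k [h1 h2]; split; lia.
have [w [Tw [c1 c2]]] := cut hN (m := m) (q := (c%:Z - a%:Z - 1)%R) (j := (b%:Z - a%:Z - 1)%R) (z := z)
  ltac:(lia) ltac:(lia) ltac:(by apply: TS (sh c hWc) => k [h1 h2]; split; lia)
  ltac:(by apply: TS (sh b hb) => k [h1 h2]; split; lia).
exists (gm S z w); split; first by split.
by apply: PQ => //; apply: hm; apply: TS Tw => k [h1 h2]; split; lia.
Qed.
Lemma cont_closure (X Y : topologicalType) (f : X -> Y) (A : set X) x :
  continuous f -> closure A x -> closure (f @` A) (f x).
Proof.
move=> fc cA B hB.
have [a [Aa Ba]] := cA _ (fc x B hB).
by exists (f a); split => //; exists a.
Qed.

Lemma closure_sub_closed (X : topologicalType) (A B : set X) :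
  closed B -> A `<=` B -> closure A `<=` B.
Proof. by move=> cB sAB; apply: subset_trans (closureS sAB) cB. Qed.

Lemma recur G (S : setup G) x0 :
  closure [set zp S k x0 | k in [set: int]] = setT ->
  closure [set zp S n%:Z x0 | n in [set n : nat | (1 <= n)%N]] x0 ->
  forall O, open O -> O !=set0 -> forall M : nat, exists n : nat, (M <= n)%N /\ O (zp S n x0).
Proof.
move=> dense x01.
pose SM := fun M : nat => closure [set zp S n%:Z x0 | n in [set n : nat | (M <= n)%N]].
have img : forall M : nat, closure [set zp S n%:Z x0 | n in [set n : nat | (1 <= n)%N]] x0 ->
    SM M.+1 (zp S M x0).
  move=> M h; have := cont_closure (@zpc G S M) h; apply: closureS.
  move=> y [_ [n n1 <-] <-]; exists (M + n)%N; first by move: n1 => /= n1; lia.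
  by rewrite -zpD -PoszD.
have inc : forall M, SM 0%N `<=` SM M.
  elim=> [|M IH] //; apply: subset_trans IH _.
  apply: closure_sub_closed; first exact: closed_closure.
  move=> y [n nM' <-]; have [->|nM] := eqVneq n M; first exact: img.
  apply: subset_closure; exists n => //=; move: nM' nM => /= nM' /eqP nM; lia.
have all : SM 0%N = setT.
  apply/seteqP; split => //; rewrite -dense.
  apply: closure_sub_closed; first exact: closed_closure.
  move=> y [k _ <-]; case: k => [n|n].
  - by apply: subset_closure; exists n.
  - have x0S : SM n.+1 x0.
      apply: inc; apply: (closureS _ x01) => w [m m1 <-]; exists m => //.
    have := cont_closure (@zpc G S (Negz n)) x0S; apply: closure_sub_closed.
      exact: closed_closure.
    move=> w [_ [m m1 <-] <-]; apply: subset_closure.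
    exists (m - n.+1)%N => //.
    rewrite -zpD; congr zp; rewrite NegzE; move: m1 => /= m1; lia.
move=> O oO [q Oq] M.
have : SM M q by apply: inc; rewrite all.
move=> /(_ O (open_nbhs_nbhs (conj oO Oq))) [y [[n nM <-] On]].
by exists n.
Qed.
Lemma zpow_swap (X : Type) (f g : X -> X) k x : zpow g f k x = zpow f g (- k)%R x.
Proof. by case: k => [[|n]|n]. Qed.

Definition swapS G (S : setup G) : setup G.
Proof.
refine (@Setup G (gm S) (gi S) (ge S) (ai S) (al S) (V S) (tg S) (hs S) (cpt S) _ (Vo S) (Vs S) _).
- split; [exact: aiM|exact: aiK|exact: alK|exact: aic|exact: alc].
- apply/seteqP; split => x.
  + move=> hx; apply: (@Tall_e G S) => k.
    have [v Vv hv] := hx k I; rewrite zpow_swap in hv.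
    by rewrite -hv zpKV.
  + move=> -> k _; exists (ge S); first exact: V1.
    by rewrite zpow_swap; exact: zpe.
Defined.

Lemma zp_swap G (S : setup G) k x : zp (swapS S) k x = zp S (- k)%R x.
Proof. exact: zpow_swap. Qed.

Lemma con_fix (X : topologicalType) (f : X -> X) (e : X) : f e = e -> con e f e.
Proof.
move=> fe; rewrite /con /=; have -> : (fun n => iter n f e) = fun _ => e.
  by apply/funext; elim=> //= n ->.
exact: cvg_cst.
Qed.
Lemma trivial_case G (S : setup G) x0 :
  closure [set zp S k x0 | k in [set: int]] = setT ->
  ~ closure [set zp S n%:Z x0 | n in [set n : nat | (1 <= n)%N]] x0 ->
  ~ closure [set zp (swapS S) n%:Z x0 | n in [set n : nat | (1 <= n)%N]] x0 ->
  forall y : G, y = ge S.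
Proof.
move=> dense n1 n2.
have cls : forall x : G, closed [set x].
  exact: accessible_closed_set1 (hausdorff_accessible (hs S)).
have [B1 [hB1 e1]] : exists B, nbhs x0 B /\
    ~ ([set zp S n%:Z x0 | n in [set n : nat | (1 <= n)%N]] `&` B !=set0).
  apply: contrapT => h; apply: n1 => B hB; apply: contrapT => hn; apply: h.
  by exists B.
have [B2 [hB2 e2]] : exists B, nbhs x0 B /\
    ~ ([set zp (swapS S) n%:Z x0 | n in [set n : nat | (1 <= n)%N]] `&` B !=set0).
  apply: contrapT => h; apply: n2 => B hB; apply: contrapT => hn; apply: h.
  by exists B.
have hB : nbhs x0 (B1 `&` B2) by apply: filterI.
move: hB; rewrite nbhsE => -[O [oO Ox0] sO].
have Osing : forall y, O y -> y = x0.
  move=> y Oy; apply: contrapT => nyx.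
  have oO' : open (O `&` ~` [set x0]).
    by apply: openI => //; rewrite -closedC setCK.
  have : closure [set zp S k x0 | k in [set: int]] y by rewrite dense.
  move=> /(_ _ (open_nbhs_nbhs (conj oO' (conj Oy nyx)))) [z [[k _ <-] [Oz nz]]].
  move: Oz nz; case: k => [[|n]|n] Oz nz.
  - by apply: nz.
  - apply: e1; exists (zp S n.+1 x0); split; first by exists n.+1.
    exact: (sO _ Oz).1.
  - apply: e2; exists (zp S (Negz n) x0); split; first by exists n.+1 => //; rewrite zp_swap.
    exact: (sO _ Oz).2.
have oe : open [set ge S].
  have -> : [set ge S] = gm S x0 @^-1` O.
    apply/seteqP; split => y.
    - by move=> ->; rewrite /= gx1.
    - by move=> /Osing h; apply: (@gcanl G S x0); rewrite h gx1.
  by apply: open_comp => [y _|//]; exact: lmulc.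
have x0e : x0 = ge S.
  have : closure [set zp S k x0 | k in [set: int]] (ge S) by rewrite dense.
  move=> /(_ _ (open_nbhs_nbhs (conj oe erefl))) [z [[k _ <-] hk]].
  by rewrite -(zpK S k x0) hk zpe.
move=> y.
have : closure [set ge S] y.
  have : closure [set zp S k x0 | k in [set: int]] y by rewrite dense.
  apply: closureS => z [k _ <-]; by rewrite x0e zpe.
exact: cls.
Qed.
Theorem corollary5p9 (G : topologicalType) (mul : G -> G -> G) (inv : G -> G)
  (e : G) (alpha alpha_inv : G -> G) :
  is_topological_group mul inv e ->
  hausdorff_space G ->
  compact [set: G] ->
  is_top_group_automorphism mul alpha alpha_inv ->
  top_transitive alpha alpha_inv ->
  finite_depth mul inv e alpha alpha_inv ->
  closure (con e alpha `&` con e alpha_inv) = setT.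
Proof.
move=> htg hhs hcpt haut [x0 hx0] [V0 [oV sV dV]].
pose S := @Setup G mul inv e alpha alpha_inv V0 htg hhs hcpt haut oV sV dV.
have dense : closure [set zp S k x0 | k in [set: int]] = setT := hx0.
have dense' : closure [set zp (swapS S) k x0 | k in [set: int]] = setT.
  rewrite -dense; congr closure; apply/seteqP; split => y [k _ <-].
  - by exists (- k)%R => //; rewrite zp_swap.
  - by exists (- k)%R => //; rewrite zp_swap opprK.
case: (pselect (closure [set zp S n%:Z x0 | n in [set n : nat | (1 <= n)%N]] x0)) => h1.
  exact: (ML (recur dense h1)).
case: (pselect (closure [set zp (swapS S) n%:Z x0 | n in [set n : nat | (1 <= n)%N]] x0)) => h2.
  rewrite setIC; exact: (ML (recur dense' h2)).
have triv := trivial_case dense h1 h2.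
apply/seteqP; split => // y _; rewrite (triv y); apply: subset_closure.
split; apply: con_fix.
- exact: (@zpe G S 1%R).
- exact: (@zpe G S (-1)%R).
Qed.
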